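(* Let $G$ and $H$ be connected graphs. Then $$dim_s(G\square H)\ge \mu(H_{SR})\,dim_s(G\square K_2)\ge 2\,\mu(G_{SR})\,\mu(H_{SR}).$$
   Context: Graphs are finite, simple, undirected; for connected $G$, $d_G$ is the shortest-path distance and $I_G[u,v]$ is the set of vertices lying on some shortest $u$–$v$ path. A vertex $w$ strongly resolves vertices $u,v$ if $v\in I_G[u,w]$ or $u\in I_G[v,w]$. A strong resolving set of $G$ is a set $S\subseteq V(G)$ such that every pair of vertices is strongly resolved by some vertex of $S$; $dim_s(G)$ is the minimum cardinality of such a set. A vertex $u$ is maximally distant from $v$ if $d_G(v,w)\le d_G(u,v)$ for every neighbor $w$ of $u$; distinct $u,v$ are mutually maximally distant if each is maximally distant from the other. The boundary $\partial(G)$ is the set of vertices mutually maximally distant with some vertex. The strong resolving graph $G_{SR}$ has vertex set $\partial(G)$, two vertices adjacent iff they are mutually maximally distant in $G$. $\mu(F)$ is the matching number (maximum size of a matching) of $F$. $K_2$ is the complete graph on two vertices. $G\square H$ denotes the Cartesian product: vertex set $V(G)\times V(H)$, $(a,b)\sim(c,d)$ iff ($a=c$ and $bd\in E(H)$) or ($b=d$ and $ac\in E(G)$). *)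

(* Defs.v *)
From mathcomp Require Import all_boot.
Set Implicit Arguments. Unset Strict Implicit. Unset Printing Implicit Defensive.

Section Graphs.
Variable T : finType.
Variable e : rel T.

Definition simple_graph : Prop := symmetric e /\ irreflexive e.

Definition connected_graph : Prop := forall u v : T, connect e u v.

Definition walk_len (n : nat) (u v : T) : bool :=
  [exists p : n.-tuple T, path e u p && (last u p == v)].

(* shortest-path distance: least n with a u-v walk of length n
   (for connected graphs it is < #|T|) *)
Definition dist (u v : T) : nat :=
  find (fun n => walk_len n u v) (iota 0 #|T|).

Definition in_interval (u v x : T) : bool := dist u x + dist x v == dist u v.

Definition strongly_resolves (w u v : T) : bool :=
  in_interval u w v || in_interval v w u.

Definition strong_resolving_set (S : {set T}) : bool :=
  [forall u, forall v, (u != v) ==> [exists w in S, strongly_resolves w u v]].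

Definition sdim : nat :=
  \big[minn/#|T|]_(S : {set T} | strong_resolving_set S) #|S|.

Definition max_distant (u v : T) : bool :=
  [forall w, e u w ==> (dist v w <= dist u v)].

Definition mutually_max_distant (u v : T) : bool :=
  (u != v) && max_distant u v && max_distant v u.

Definition boundary : {set T} :=
  [set u | [exists v, mutually_max_distant u v]].

Definition SRV : finType := {x : T | x \in boundary}.
Definition sr_rel : rel SRV :=
  fun x y => mutually_max_distant (val x) (val y).

End Graphs.

Section Matching.
Variable V : finType.
Variable r : rel V.

Definition is_matching (M : {set {set V}}) : bool :=
  [forall E in M, [exists x, exists y, r x y && (E == [set x; y])]]
  && trivIset M.

Definition matching_number : nat :=
  \max_(M : {set {set V}} | is_matching M) #|M|.
End Matching.

Definition mu_SR (T : finType) (e : rel T) : nat :=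
  matching_number (@sr_rel T e).

Definition cart_rel (T U : finType) (e : rel T) (f : rel U) : rel (T * U) :=
  fun a b => ((a.1 == b.1) && f a.2 b.2) || ((a.2 == b.2) && e a.1 b.1).

Definition K2_rel : rel bool := fun x y => x != y.

(* Main.v *)
Require Import Defs.
From mathcomp Require Import all_boot.
Set Implicit Arguments. Unset Strict Implicit. Unset Printing Implicit Defensive.

Inductive W (T : finType) (e : rel T) : nat -> T -> T -> Prop :=
| W0 u : W e 0 u u
| WS n u w v : e u w -> W e n w v -> W e n.+1 u v.

Lemma walk_lenP (T : finType) (e : rel T) n u v : walk_len e n u v <-> W e n u v.
Proof.
elim: n u => [|n IH] u.
  split.
    by case/existsP=> p; rewrite tuple0 /= => /eqP->; constructor.
  by move=> H; inversion H; subst; apply/existsP; exists [tuple]; rewrite /= eqxx.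
split.
  case/existsP=> [[[|w s] //= Hs]] /andP[/andP[euw ps] lv].
  apply: (WS euw); apply/IH; apply/existsP; exists (Tuple (Hs : size s == n)).
  by rewrite /= ps lv.
move=> H; inversion H; subst.
have /IH/existsP[p /andP[pp lp]] := H2.
by apply/existsP; exists [tuple of w :: p]; rewrite /= H1 pp lp.
Qed.

Lemma W_connect (T : finType) (e : rel T) n u v : W e n u v -> connect e u v.
Proof.
elim=> [x|m x w y exw _ IH]; first exact: connect0.
exact: connect_trans (connect1 exw) IH.
Qed.

Lemma path_W (T : finType) (e : rel T) u p : path e u p -> W e (size p) u (last u p).
Proof.
elim: p u => [|w p IH] u /=; first by constructor.
by case/andP=> euw pp; apply: WS euw (IH _ pp).
Qed.

Lemma connect_short (T : finType) (e : rel T) u v :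
  connect e u v -> exists2 n, n < #|T| & W e n u v.
Proof.
case/connectP=> p pp ->.
case: (shortenP pp) => p' pp' up' _.
exists (size p'); last exact: path_W.
have := max_card (mem (u :: p')).
by rewrite (card_uniqP up') /=.
Qed.

Lemma dist_le (T : finType) (e : rel T) n u v : W e n u v -> dist e u v <= n.
Proof.
move=> H; rewrite /dist.
case: (ltnP n #|T|) => Hn; last first.
  by apply: leq_trans (find_size _ _) _; rewrite size_iota.
rewrite leqNgt; apply/negP => Hlt.
have := before_find 0 Hlt; rewrite nth_iota // add0n.
by move/walk_lenP: H => ->.
Qed.

Lemma dist_spec (T : finType) (e : rel T) u v :
  connected_graph e -> W e (dist e u v) u v.
Proof.
move=> C; case: (connect_short (C u v)) => n Hn Hw.
have Hh : has (fun n => walk_len e n u v) (iota 0 #|T|).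
  by apply/hasP; exists n; [rewrite mem_iota | apply/walk_lenP].
have := nth_find 0 Hh; rewrite /dist.
have := Hh; rewrite has_find size_iota => Hf.
by rewrite nth_iota // add0n => /walk_lenP.
Qed.

Lemma W_cat (T : finType) (e : rel T) n m u v w :
  W e n u v -> W e m v w -> W e (n + m) u w.
Proof.
elim=> [x|k x y z exy _ IH] //= H.
exact: WS exy (IH H).
Qed.

Lemma W_snoc (T : finType) (e : rel T) n u v w :
  W e n u v -> e v w -> W e n.+1 u w.
Proof.
move=> H evw; rewrite -addn1; apply: W_cat H _.
by apply: WS evw (W0 _ _).
Qed.

Lemma W_rev (T : finType) (e : rel T) n u v :
  symmetric e -> W e n u v -> W e n v u.
Proof.
move=> se; elim=> [x|k x y z exy _ IH]; first by constructor.
by apply: W_snoc IH _; rewrite se.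
Qed.

Lemma dist_sym (T : finType) (e : rel T) u v :
  symmetric e -> connected_graph e -> dist e u v = dist e v u.
Proof.
move=> se C; apply/eqP; rewrite eqn_leq.
by apply/andP; split; apply: dist_le; apply: W_rev => //; apply: dist_spec.
Qed.

Lemma dist_tri (T : finType) (e : rel T) u v w :
  connected_graph e -> dist e u w <= dist e u v + dist e v w.
Proof. by move=> C; apply: dist_le; apply: W_cat; apply: dist_spec. Qed.

Lemma dist_uu (T : finType) (e : rel T) u : dist e u u = 0.
Proof. by apply/eqP; rewrite -leqn0; apply: dist_le; constructor. Qed.

Lemma dist_eq0 (T : finType) (e : rel T) u v :
  connected_graph e -> dist e u v = 0 -> u = v.
Proof.
move=> C H; have := dist_spec u v C; rewrite H => H0.
by inversion H0.
Qed.

Lemma dist_edge (T : finType) (e : rel T) u w : e u w -> dist e u w <= 1.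
Proof. by move=> euw; apply: dist_le; apply: WS euw (W0 _ _). Qed.

Lemma dist_step (T : finType) (e : rel T) u v :
  connected_graph e -> u != v -> exists2 z, e u z & (dist e z v).+1 = dist e u v.
Proof.
move=> C nuv; have H := dist_spec u v C.
case E: (dist e u v) H => [|n] H.
  by rewrite (dist_eq0 C E) eqxx in nuv.
inversion H as [|n' x z y euz Hz]; subst.
exists z => //; congr S; apply/eqP; rewrite eqn_leq (dist_le Hz) /=.
rewrite -ltnS -E; apply: leq_trans (dist_tri _ z _ C) _; rewrite addnC -addn1 leq_add2l; exact: dist_edge.
Qed.

From mathcomp Require Import zify.

Lemma geo_end (T : finType) (e : rel T) x y w :
  symmetric e -> connected_graph e -> max_distant e y x ->
  dist e x y + dist e y w = dist e x w -> w = y.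
Proof.
move=> se C my H; apply/eqP; apply/negPn/negP => nwy.
have nyw : y != w by rewrite eq_sym.
case: (dist_step C nyw) => z eyz Hz.
have := forallP my z; rewrite eyz /= => Hxz.
have := dist_tri x z w C.
rewrite (dist_sym y x) // in Hxz; lia.
Qed.

Lemma mmd_resolve (T : finType) (e : rel T) x y w :
  symmetric e -> connected_graph e -> mutually_max_distant e x y ->
  strongly_resolves e w x y -> (w == x) || (w == y).
Proof.
move=> se C /andP[/andP[_ mxy] myx] /orP[] /eqP H.
  by rewrite (geo_end se C myx H) eqxx orbT.
by rewrite (geo_end se C mxy H) eqxx.
Qed.

Lemma srs_cover (T : finType) (e : rel T) (S : {set T}) x y :
  symmetric e -> connected_graph e -> strong_resolving_set e S ->
  mutually_max_distant e x y -> (x \in S) || (y \in S).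
Proof.
move=> se C srs m; have nxy : x != y by case/andP: m => /andP[].
have := forallP (forallP srs x) y; rewrite nxy /= => /existsP[w /andP[wS sw]].
by case/orP: (mmd_resolve se C m sw) => /eqP <-; rewrite wS ?orbT.
Qed.

Lemma extend (T : finType) (e : rel T) u v :
  symmetric e -> connected_graph e ->
  exists x, dist e u x = dist e u v + dist e v x /\ max_distant e x u.
Proof.
move=> se C.
pose A := [pred x | dist e u x == dist e u v + dist e v x].
have Av : A v by rewrite /A inE dist_uu addn0.
case: (arg_maxnP (fun x => dist e u x) Av) => x /eqP Ax Hmax.
exists x; split => //; apply/forallP => w; apply/implyP => exw.
rewrite (dist_sym x u) // leqNgt; apply/negP => Hlt.
have H1 := dist_tri u x w C.
have H2 := dist_edge exw.
have H3 := dist_tri u v w C.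
have H4 := dist_tri v x w C.
have Aw : A w by rewrite /A inE; apply/eqP; lia.
have := Hmax w Aw; lia.
Qed.

Lemma cover_srs (T : finType) (e : rel T) (S : {set T}) :
  symmetric e -> connected_graph e ->
  (forall x y, mutually_max_distant e x y -> (x \in S) || (y \in S)) ->
  strong_resolving_set e S.
Proof.
move=> se C cov; apply/forallP => u; apply/forallP => v; apply/implyP => nuv.
case: (extend u v se C) => x [Hx mx].
case: (extend x u se C) => y [Hy my].
have mxy : max_distant e x y.
  apply/forallP => w; apply/implyP => exw.
  rewrite leqNgt; apply/negP => Hlt.
  have H1 := dist_tri y x w C.
  have H2 := dist_edge exw.
  have H3 := dist_tri y u w C.
  have := forallP mx w; rewrite exw /= => H4.
  rewrite (dist_sym y x) // (dist_sym y u) // in H1 H3; lia.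
have nxy : x != y.
  apply/negP => /eqP exy; subst y.
  rewrite dist_uu in Hy.
  have Exu : x = u by apply: (dist_eq0 C); lia.
  subst x; rewrite dist_uu in Hx.
  have Euv : u = v by apply: (dist_eq0 C); lia.
  by rewrite Euv eqxx in nuv.
have : mutually_max_distant e x y by rewrite /mutually_max_distant nxy mxy my.
move/cov/orP=> [xS|yS]; apply/existsP.
  by exists x; rewrite xS /strongly_resolves /in_interval Hx eqxx.
exists y; rewrite yS /strongly_resolves /in_interval; apply/orP; right.
have H1 := dist_tri x v y C.
have H2 := dist_tri v u y C.
rewrite (dist_sym x u) // (dist_sym x v) // in Hy H1.
rewrite (dist_sym v u) // in H2 *; apply/eqP; lia.
Qed.

Lemma bigmin_le (I : eqType) (r : seq I) (P : pred I) (F : I -> nat) d j :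
  j \in r -> P j -> \big[minn/d]_(i <- r | P i) F i <= F j.
Proof.
elim: r => [|i r IH] //; rewrite inE big_cons => /orP[/eqP<-|jr] Pj.
  by rewrite Pj geq_minl.
case: (P i); last exact: IH.
by rewrite geq_min IH ?orbT.
Qed.

Lemma bigmin_ge (I : eqType) (r : seq I) (P : pred I) (F : I -> nat) d n :
  n <= d -> (forall i, P i -> n <= F i) -> n <= \big[minn/d]_(i <- r | P i) F i.
Proof.
move=> nd H; elim/big_ind: _ => // a b Ha Hb.
by rewrite leq_min Ha Hb.
Qed.

Lemma srs_setT (T : finType) (e : rel T) : strong_resolving_set e setT.
Proof.
apply/forallP => u; apply/forallP => v; apply/implyP => _.
apply/existsP; exists u; rewrite inE /strongly_resolves /in_interval.
by rewrite dist_uu addn0 eqxx orbT.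
Qed.

Lemma sdim_le (T : finType) (e : rel T) (S : {set T}) :
  strong_resolving_set e S -> sdim e <= #|S|.
Proof. by move=> H; apply: bigmin_le => //; rewrite mem_index_enum. Qed.

Lemma sdim_ge (T : finType) (e : rel T) n :
  (forall S, strong_resolving_set e S -> n <= #|S|) -> n <= sdim e.
Proof.
move=> H; apply: bigmin_ge => //.
by rewrite -cardsT; apply: H; apply: srs_setT.
Qed.


Lemma cart_sym (T U : finType) (e : rel T) (f : rel U) :
  symmetric e -> symmetric f -> symmetric (cart_rel e f).
Proof.
by move=> se sf [a x] [c y]; rewrite /cart_rel /= se sf (eq_sym a) (eq_sym x).
Qed.

Lemma W_lift1 (T U : finType) (e : rel T) (f : rel U) n a c x :
  W e n a c -> W (cart_rel e f) n (a, x) (c, x).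
Proof.
elim=> [b|k b w d ebw _ IH]; first by constructor.
by apply: WS IH; rewrite /cart_rel /= eqxx ebw orbT.
Qed.

Lemma W_lift2 (T U : finType) (e : rel T) (f : rel U) n x y a :
  W f n x y -> W (cart_rel e f) n (a, x) (a, y).
Proof.
elim=> [b|k b w d ebw _ IH]; first by constructor.
by apply: WS IH; rewrite /cart_rel /= eqxx ebw.
Qed.

Lemma W_proj (T U : finType) (e : rel T) (f : rel U) n p q :
  W (cart_rel e f) n p q ->
  exists n1 n2, n = n1 + n2 /\ W e n1 p.1 q.1 /\ W f n2 p.2 q.2.
Proof.
elim=> [b|k b w d ebw _ [n1 [n2 [E [H1 H2]]]]].
  by exists 0, 0; split => //; split; constructor.
case/orP: ebw => /andP[/eqP E1 ebw].
  exists n1, n2.+1; rewrite E1 addnS E; split => //; split => //.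
  exact: WS ebw H2.
exists n1.+1, n2; rewrite E1 addSn E; split => //; split => //.
exact: WS ebw H1.
Qed.

Lemma cart_conn (T U : finType) (e : rel T) (f : rel U) :
  connected_graph e -> connected_graph f -> connected_graph (cart_rel e f).
Proof.
move=> Ce Cf [a x] [c y].
apply: (@W_connect _ _ (dist e a c + dist f x y)).
apply: W_cat; first exact: W_lift1 (dist_spec _ _ Ce).
exact: W_lift2 (dist_spec _ _ Cf).
Qed.

Lemma dist_cart (T U : finType) (e : rel T) (f : rel U) a x c y :
  connected_graph e -> connected_graph f ->
  dist (cart_rel e f) (a, x) (c, y) = dist e a c + dist f x y.
Proof.
move=> Ce Cf; apply/eqP; rewrite eqn_leq; apply/andP; split.
  apply: dist_le; apply: W_cat; first exact: W_lift1 (dist_spec _ _ Ce).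
  exact: W_lift2 (dist_spec _ _ Cf).
have := dist_spec (a, x) (c, y) (cart_conn Ce Cf).
case/W_proj => n1 [n2 [-> [/dist_le H1 /dist_le H2]]].
exact: leq_add.
Qed.

Lemma md_cart (T U : finType) (e : rel T) (f : rel U) a x c y :
  symmetric e -> symmetric f -> connected_graph e -> connected_graph f ->
  max_distant (cart_rel e f) (a, x) (c, y) =
  max_distant e a c && max_distant f x y.
Proof.
move=> se sf Ce Cf; apply/idP/idP.
  move=> /forallP H; apply/andP; split; apply/forallP => w; apply/implyP => ew.
    have := H (w, x); rewrite /cart_rel /= eqxx ew orbT /=.
    rewrite !dist_cart // (dist_sym _ y) //; lia.
  have := H (a, w); rewrite /cart_rel /= eqxx ew /=.
  rewrite !dist_cart // (dist_sym _ c) //; lia.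
case/andP=> /forallP Ha /forallP Hx; apply/forallP => [[b w]]; apply/implyP.
rewrite /cart_rel /= => /orP[] /andP[/eqP <- ew]; rewrite !dist_cart //.
  have := Hx w; rewrite ew /= (dist_sym _ c) //; lia.
have := Ha b; rewrite ew /= (dist_sym _ y) //; lia.
Qed.

Lemma in_bigU_seq (X I : finType) (r : seq I) (P : pred I) (B : I -> {set X}) x :
  x \in \bigcup_(i <- r | P i) B i -> exists j, [/\ j \in r, P j & x \in B j].
Proof.
elim: r => [|i r IH]; first by rewrite big_nil inE.
rewrite big_cons; case Pi: (P i); last first.
  by case/IH => j [jr Pj xj]; exists j; rewrite inE jr orbT.
rewrite inE => /orP[xi|]; first by exists i; rewrite inE eqxx.
by case/IH => j [jr Pj xj]; exists j; rewrite inE jr orbT.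
Qed.

Lemma card_bigU_seq (X I : finType) (r : seq I) (P : pred I) (B : I -> {set X}) :
  uniq r -> (forall i j, P i -> P j -> i != j -> [disjoint B i & B j]) ->
  \sum_(i <- r | P i) #|B i| = #|\bigcup_(i <- r | P i) B i|.
Proof.
move=> ur D; elim: r ur => [|i r IH]; first by rewrite !big_nil cards0.
case/andP=> nir ur; rewrite !big_cons; case Pi: (P i); last exact: IH.
rewrite cardsU (IH ur).
suff -> : B i :&: \bigcup_(j <- r | P j) B j = set0 by rewrite cards0 subn0.
apply/setP => x; rewrite !inE; apply/negP => /andP[xi /in_bigU_seq[j [jr Pj xj]]].
have nij : i != j by apply/eqP => E; rewrite E jr in nir.
by rewrite (disjointFr (D _ _ Pi Pj nij) xi) in xj.
Qed.

Lemma sum_disjoint (X I : finType) (P : pred I) (B : I -> {set X}) (S : {set X}) :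
  (forall i, P i -> B i \subset S) ->
  (forall i j, P i -> P j -> i != j -> [disjoint B i & B j]) ->
  \sum_(i | P i) #|B i| <= #|S|.
Proof.
move=> sub D; rewrite (@card_bigU_seq X I (index_enum I) P B (index_enum_uniq I) D).
apply: subset_leq_card; apply/subsetP => x /in_bigU_seq [j [_ Pj xj]].
exact: (subsetP (sub j Pj)).
Qed.

Lemma K2_sym : symmetric K2_rel.
Proof. by move=> x y; rewrite /K2_rel eq_sym. Qed.

Lemma K2_conn : connected_graph K2_rel.
Proof.
move=> x y; case: (eqVneq x y) => [->|nxy]; first exact: connect0.
exact: connect1.
Qed.

Lemma dist_K2 b b' : dist K2_rel b b' = (b != b').
Proof.
case: (eqVneq b b') => [->|nbb]; first by rewrite dist_uu.
apply/eqP; rewrite eqn_leq dist_edge //= lt0n; apply/eqP => /(dist_eq0 K2_conn) E.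
by rewrite E eqxx in nbb.
Qed.

Lemma md_K2 b b' : max_distant K2_rel b b' = (b != b').
Proof.
case: (eqVneq b b') => [<-|nbb] /=.
  apply/negP => /forallP /(_ (~~ b)); rewrite /K2_rel !dist_K2.
  by case: b.
apply/forallP => w; apply/implyP => _; rewrite !dist_K2 nbb.
by case: (b' != w).
Qed.

Lemma mmd_sym (T : finType) (e : rel T) x y :
  mutually_max_distant e x y = mutually_max_distant e y x.
Proof. by rewrite /mutually_max_distant eq_sym andbAC. Qed.

Lemma mmd_GK (T : finType) (e : rel T) a b c b' :
  symmetric e -> connected_graph e ->
  mutually_max_distant (cart_rel e K2_rel) (a, b) (c, b') ->
  [/\ b != b', max_distant e a c & max_distant e c a].
Proof.
move=> se Ce /andP[/andP[_ H1] H2].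
rewrite !md_cart // ?md_K2 in H1 H2; try exact: K2_sym; try exact: K2_conn.
by case/andP: H1 => -> ->; case/andP: H2 => ->.
Qed.

Lemma mmd_GH (T U : finType) (e : rel T) (f : rel U) a c x y :
  symmetric e -> connected_graph e -> symmetric f -> connected_graph f ->
  max_distant e a c -> max_distant e c a -> mutually_max_distant f x y ->
  mutually_max_distant (cart_rel e f) (a, x) (c, y).
Proof.
move=> se Ce sf Cf mac mca /andP[/andP[nxy mxy] myx].
rewrite /mutually_max_distant !md_cart // mac mca mxy myx !andbT.
by apply/eqP => -[_ E]; rewrite E eqxx in nxy.
Qed.

Lemma mmd_GK2 (T : finType) (e : rel T) a c b :
  symmetric e -> connected_graph e -> mutually_max_distant e a c ->
  mutually_max_distant (cart_rel e K2_rel) (a, b) (c, ~~ b).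
Proof.
move=> se Ce /andP[/andP[nac mac] mca].
rewrite /mutually_max_distant !md_cart //; try exact: K2_sym; try exact: K2_conn.
rewrite !md_K2 mac mca; case: b => /=; rewrite ?andbT //.
  by apply/eqP => -[E]; rewrite E eqxx in nac.
by apply/eqP => -[E]; rewrite E eqxx in nac.
Qed.

Lemma matching_edge (V : finType) (r : rel V) M E :
  is_matching r M -> E \in M -> exists x y, r x y /\ E = [set x; y].
Proof.
case/andP=> /forallP H _ EM; have := H E; rewrite EM /=.
by case/existsP => x /existsP [y /andP[rxy /eqP ->]]; exists x, y.
Qed.

Lemma matching_max (V : finType) (r : rel V) :
  exists2 M, is_matching r M & matching_number r = #|M|.
Proof.
have m0 : is_matching r set0.
  apply/andP; split; first by apply/forallP => E; rewrite inE.
  by apply/trivIsetP => A B; rewrite inE.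
rewrite /matching_number (bigmax_eq_arg _ m0).
by case: arg_maxnP => //= M HM _; exists M.
Qed.

Lemma ineq2 (T : finType) (e : rel T) :
  symmetric e -> connected_graph e -> 2 * mu_SR e <= sdim (cart_rel e K2_rel).
Proof.
move=> se Ce; have sK := cart_sym se K2_sym; have CK := cart_conn Ce K2_conn.
apply: sdim_ge => S srsS.
case: (matching_max (@sr_rel T e)) => M HM; rewrite /mu_SR => ->.
pose B (E : {set SRV e}) := S :&: [set p : T * bool | [exists z in E, val z == p.1]].
apply: leq_trans (_ : \sum_(E in M) #|B E| <= #|S|); last first.
  apply: sum_disjoint; first by move=> E _; apply: subsetIl.
  move=> E E' EM E'M nEE'; rewrite -setI_eq0; apply/eqP/setP => p.
  rewrite !inE; apply/negP => /andP[/andP[_ /existsP[z /andP[zE /eqP hz]]]].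
  case/andP=> _ /existsP[z' /andP[z'E /eqP hz']].
  have zz : z = z' by apply: val_inj; rewrite hz hz'.
  case/andP: HM => _ /trivIsetP /(_ E E' EM E'M nEE') D.
  by rewrite zz (disjointFl D z'E) in zE.
rewrite mulnC -sum_nat_const; apply: leq_sum => E EM.
case: (matching_edge HM EM) => x [y [rxy Exy]].
have mxy : mutually_max_distant e (val x) (val y) := rxy.
have nxy : val x != val y by case/andP: mxy => /andP[].
have inB : forall z b, z \in E -> (val z, b) \in S -> (val z, b) \in B E.
  move=> z b zE zS; rewrite !inE zS /=; apply/existsP; exists z.
  by rewrite zE eqxx.
have xE : x \in E by rewrite Exy !inE eqxx.
have yE : y \in E by rewrite Exy !inE eqxx orbT.
have H1 := srs_cover sK CK srsS (mmd_GK2 false se Ce mxy).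
have H2 := srs_cover sK CK srsS (mmd_GK2 false se Ce (etrans (mmd_sym _ _ _) mxy)).
simpl in H1, H2.
have Hpair : forall p1 p2, p1 != p2 -> p1 \in B E -> p2 \in B E -> 2 <= #|B E|.
  move=> p1 p2 n12 h1 h2; apply: leq_trans (_ : #|[set p1; p2]| <= _).
    by rewrite cards2 n12.
  by apply: subset_leq_card; apply/subsetP => p /set2P [] ->.
case/orP: H1 => h1; case/orP: H2 => h2.
- apply: (Hpair _ _ _ (inB _ _ xE h1) (inB _ _ yE h2)).
  by apply/eqP => -[E']; have nxy' : sval x != sval y := nxy; rewrite E' eqxx in nxy'.
- by apply: (Hpair _ _ _ (inB _ _ xE h1) (inB _ _ xE h2)); apply/eqP; case.
- by apply: (Hpair _ _ _ (inB _ _ yE h1) (inB _ _ yE h2)); apply/eqP; case.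
- apply: (Hpair _ _ _ (inB _ _ yE h1) (inB _ _ xE h2)).
  by apply/eqP => -[E']; have nxy' : sval x != sval y := nxy; rewrite E' eqxx in nxy'.
Qed.

Lemma ineq1 (T U : finType) (e : rel T) (f : rel U) :
  symmetric e -> connected_graph e -> symmetric f -> connected_graph f ->
  mu_SR f * sdim (cart_rel e K2_rel) <= sdim (cart_rel e f).
Proof.
move=> se Ce sf Cf.
have sK := cart_sym se K2_sym; have CK := cart_conn Ce K2_conn.
have sH := cart_sym se sf; have CH := cart_conn Ce Cf.
apply: sdim_ge => S srsS.
case: (matching_max (@sr_rel U f)) => M HM; rewrite /mu_SR => ->.
pose B (E : {set SRV f}) := S :&: [set p : T * U | [exists z in E, val z == p.2]].
apply: leq_trans (_ : \sum_(E in M) #|B E| <= #|S|); last first.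
  apply: sum_disjoint; first by move=> E _; apply: subsetIl.
  move=> E E' EM E'M nEE'; rewrite -setI_eq0; apply/eqP/setP => p.
  rewrite !inE; apply/negP => /andP[/andP[_ /existsP[z /andP[zE /eqP hz]]]].
  case/andP=> _ /existsP[z' /andP[z'E /eqP hz']].
  have zz : z = z' by apply: val_inj; rewrite hz hz'.
  case/andP: HM => _ /trivIsetP /(_ E E' EM E'M nEE') D.
  by rewrite zz (disjointFl D z'E) in zE.
rewrite -sum_nat_const; apply: leq_sum => E EM.
case: (matching_edge HM EM) => x [y [rxy Exy]].
have mxy : mutually_max_distant f (val x) (val y) := rxy.
have nxy : val x != val y by case/andP: mxy => /andP[].
have nxy' : sval x != sval y := nxy.
pose phi (p : T * U) := (p.1, p.2 != val x).
pose psi (b : bool) := if b then val y else val x.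
have inE2 : forall p, p \in B E -> (p.2 == val x) || (p.2 == val y).
  move=> p; rewrite !inE => /andP[_ /existsP[z /andP[zE /eqP <-]]].
  by move: zE; rewrite Exy !inE => /orP[] /eqP ->; rewrite eqxx ?orbT.
have -> : #|B E| = #|phi @: B E|.
  apply/esym/card_in_imset => [[a u]] [c w] /inE2 /= hu /inE2 /= hw [-> E2].
  congr pair; case/orP: hu => /eqP hu; case/orP: hw => /eqP hw; rewrite hu hw //.
    by move: E2; rewrite hu hw eqxx /= => /esym/negbFE/eqP E3; rewrite E3 eqxx in nxy'.
  by move: E2; rewrite hu hw eqxx /= => /negbFE/eqP.
apply: sdim_le; apply: cover_srs => //.
move=> [a b] [c b'] /(mmd_GK se Ce) [nbb mac mca].
have mpsi : mutually_max_distant f (psi b) (psi b').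
  by case: b b' nbb => [] [] //= _; rewrite mmd_sym.
have := srs_cover sH CH srsS (mmd_GH se Ce sf Cf mac mca mpsi).
have key : forall a0 b0, (a0, psi b0) \in S -> (a0, b0) \in phi @: B E.
  move=> a0 b0 h; have -> : (a0, b0) = phi (a0, psi b0).
    clear h; rewrite /phi /psi /=; case: b0 => /=; last by rewrite eqxx.
    by rewrite eq_sym nxy'.
  apply: imset_f; rewrite !inE h /=; apply/existsP.
  case: b0 h => /= _; [exists y | exists x]; rewrite eqxx andbT Exy !inE eqxx //.
  by rewrite orbT.
by case/orP => h; rewrite (key _ _ h) ?orbT.
Qed.

Theorem theorem19 (T U : finType) (e : rel T) (f : rel U) :
  simple_graph e -> connected_graph e ->
  simple_graph f -> connected_graph f ->
  mu_SR f * sdim (cart_rel e K2_rel) <= sdim (cart_rel e f) /\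
  2 * mu_SR e * mu_SR f <= mu_SR f * sdim (cart_rel e K2_rel).
Proof.
move=> [se _] Ce [sf _] Cf; split; first exact: ineq1.
by rewrite mulnC leq_mul2l ineq2 ?orbT.
Qed.
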